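(* For $n\in\mathbb N$ let $A_n=\mathrm{diag}(n^{-1/2},n^{-1})$ (a $2\times 2$ matrix). There exists $n_0\in\mathbb N$ such that, for the index set $I=\{\lfloor i(\log i)^2\rfloor: i\ge n_0\}\subset\mathbb N$ and the matrices $(A_n)_{n\in I}$, the pressure satisfies $P(t)=\infty$ for all $0\le t<\frac32$ and $P(t)<0$ for all $t\ge\frac32$; in particular $P(t)\ne0$ for every $t\in[0,\infty)$.
   Context: For a countable index set $I$ and matrices $A_n$ ($n\in I$), for a word $\mathtt j=(j_1,\dots,j_k)$, $\alpha_1(\mathtt j)\ge\alpha_2(\mathtt j)$ are the singular values of $A_{j_1}\cdots A_{j_k}$, and with $d=2$ the singular value function is $\phi^t(\mathtt j)=\alpha_1(\mathtt j)^t$ for $0\le t<1$, $\phi^t(\mathtt j)=\alpha_1(\mathtt j)\alpha_2(\mathtt j)^{t-1}$ for $1\le t<2$, and $\phi^t(\mathtt j)=(\alpha_1(\mathtt j)\alpha_2(\mathtt j))^{t/2}$ for $t\ge2$. The pressure is $P(t)=\lim_{k\to\infty}\frac1k\log\sum_{\mathtt j\in I^k}\phi^t(\mathtt j)\in(-\infty,\infty]$. *)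

(* Defs.v *)
From Stdlib Require Import Reals Lra Lia ZArith List.
Import ListNotations.
Open Scope R_scope.

Record mat2 := Mat2 { m11 : R; m12 : R; m21 : R; m22 : R }.

Definition mmul (A B : mat2) : mat2 :=
  Mat2 (m11 A * m11 B + m12 A * m21 B) (m11 A * m12 B + m12 A * m22 B)
       (m21 A * m11 B + m22 A * m21 B) (m21 A * m12 B + m22 A * m22 B).

Definition mid : mat2 := Mat2 1 0 0 1.

(** Singular values of a 2x2 matrix: square roots of the eigenvalues of A^T A,
    which has trace = squared Frobenius norm and determinant = det(A)^2. *)
Definition fro2 (A : mat2) : R := m11 A ^ 2 + m12 A ^ 2 + m21 A ^ 2 + m22 A ^ 2.
Definition det2 (A : mat2) : R := m11 A * m22 A - m12 A * m21 A.
Definition sv1 (A : mat2) : R :=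
  sqrt ((fro2 A + sqrt (fro2 A ^ 2 - 4 * det2 A ^ 2)) / 2).
Definition sv2 (A : mat2) : R :=
  sqrt ((fro2 A - sqrt (fro2 A ^ 2 - 4 * det2 A ^ 2)) / 2).

Definition word_prod (A : nat -> mat2) (w : list nat) : mat2 :=
  fold_right (fun j M => mmul (A j) M) mid w.

(** Singular value function phi^t for d = 2 (t >= 0; for t < 0 the value is junk). *)
Definition sing_fun (t : R) (M : mat2) : R :=
  if Rlt_dec t 1 then Rpower (sv1 M) t
  else if Rlt_dec t 2 then sv1 M * Rpower (sv2 M) (t - 1)
  else Rpower (sv1 M * sv2 M) (t / 2).

Definition phi (A : nat -> mat2) (t : R) (w : list nat) : R :=
  sing_fun t (word_prod A w).

Definition word_in (I : nat -> Prop) (k : nat) (w : list nat) : Prop :=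
  length w = k /\ Forall I w.

(** Finite partial sums of sum_{j in I^k} phi^t(j) (over finite sets of distinct words). *)
Definition partial_sums (I : nat -> Prop) (A : nat -> mat2) (t : R) (k : nat) : R -> Prop :=
  fun s => exists l : list (list nat),
    NoDup l /\ Forall (word_in I k) l /\ s = fold_right Rplus 0 (map (phi A t) l).

Definition Zsum_finite I A t k (S : R) : Prop := is_lub (partial_sums I A t k) S.
Definition Zsum_infinite I A t k : Prop := ~ bound (partial_sums I A t k).

Definition pressure_is (I : nat -> Prop) (A : nat -> mat2) (t L : R) : Prop :=
  exists Z : nat -> R,
    (forall k, (1 <= k)%nat -> Zsum_finite I A t k (Z k)) /\
    Un_cv (fun k => ln (Z (S k)) / INR (S k)) L.

(** P(t) = +infinity: (1/k) log Z_k -> +infinity, with log(+infinity) = +infinity. *)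
Definition pressure_infinite (I : nat -> Prop) (A : nat -> mat2) (t : R) : Prop :=
  forall M : R, exists K : nat, forall k : nat, (K <= k)%nat -> (1 <= k)%nat ->
    Zsum_infinite I A t k \/
    exists Zk, Zsum_finite I A t k Zk /\ M <= ln Zk / INR k.

Definition A_diag (n : nat) : mat2 :=
  Mat2 (Rpower (INR n) (- (1/2))) 0 0 (/ INR n).

Definition index_set (n0 : nat) (m : nat) : Prop :=
  exists i : nat, (n0 <= i)%nat /\
    Z.of_nat m = Int_part (INR i * (ln (INR i)) ^ 2).

(* Main.v *)
Require Import Defs.
From Stdlib Require Import Reals Lra Lia ZArith List Classical.
Import ListNotations.
Open Scope R_scope.

Lemma ln_le' : forall x y, 0 < x -> x <= y -> ln x <= ln y.
Proof. intros x y Hx Hxy. destruct (Req_dec x y) as [->|H]; [lra|].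
  left; apply ln_increasing; lra. Qed.

Lemma ln_le_m1 : forall x, 0 < x -> ln x <= x - 1.
Proof. intros x Hx. pose proof (exp_ineq1_le (ln x)). rewrite exp_ln in H; lra. Qed.

Lemma ln3_ge1 : 1 <= ln 3.
Proof. rewrite <- (ln_exp 1) at 1. apply ln_le'. apply exp_pos. apply exp_le_3. Qed.

Definition xx (i : nat) : R := INR i * (ln (INR i)) ^ 2.
Definition mm (i : nat) : nat := Z.to_nat (Int_part (xx i)).

Lemma ln_ge1 : forall i, (3 <= i)%nat -> 1 <= ln (INR i).
Proof. intros i Hi. apply le_INR in Hi. simpl in Hi.
  eapply Rle_trans; [apply ln3_ge1|]. apply ln_le'; lra. Qed.

Lemma xx_ge : forall i, (3 <= i)%nat -> INR i <= xx i.
Proof. intros i Hi. pose proof (ln_ge1 i Hi). unfold xx.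
  pose proof (le_INR _ _ Hi). simpl in H0.
  assert (1 <= ln (INR i) ^ 2) by nra. nra. Qed.

Lemma Int_part_nonneg : forall r, 0 <= r -> (0 <= Int_part r)%Z.
Proof. intros r Hr. destruct (base_Int_part r) as [H1 H2].
  destruct (Z_lt_le_dec (Int_part r) 0) as [H|H]; auto.
  exfalso. assert (Int_part r <= -1)%Z by lia. apply IZR_le in H0. lra. Qed.

Lemma mm_Z : forall i, (3 <= i)%nat -> Z.of_nat (mm i) = Int_part (xx i).
Proof. intros i Hi. unfold mm. rewrite Z2Nat.id; auto.
  apply Int_part_nonneg. pose proof (xx_ge i Hi). pose proof (pos_INR i). lra. Qed.

Lemma mm_R : forall i, (3 <= i)%nat -> xx i - 1 < INR (mm i) <= xx i.
Proof. intros i Hi. rewrite INR_IZR_INZ, mm_Z; auto.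
  destruct (base_Int_part (xx i)). lra. Qed.

Lemma mm_ge : forall i, (3 <= i)%nat -> (i <= mm i)%nat.
Proof. intros i Hi. destruct (mm_R i Hi). pose proof (xx_ge i Hi).
  assert (INR i < INR (mm i) + 1) by lra.
  rewrite <- S_INR in H2. apply INR_lt in H2. lia. Qed.

Lemma xx_step : forall i j, (3 <= i)%nat -> (i < j)%nat -> xx i + 1 <= xx j.
Proof. intros i j Hi Hij. unfold xx.
  pose proof (ln_ge1 i Hi). assert (3 <= j)%nat by lia. pose proof (ln_ge1 j H0).
  assert (Hij' : (S i <= j)%nat) by lia. apply le_INR in Hij'. rewrite S_INR in Hij'. pose proof (le_INR _ _ Hi). simpl in H2.
  assert (ln (INR i) <= ln (INR j)) by (apply ln_le'; lra).
  assert (ln (INR i) ^ 2 <= ln (INR j) ^ 2) by (apply pow_incr; lra).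
  nra. Qed.

Lemma mm_lt : forall i j, (3 <= i)%nat -> (i < j)%nat -> (mm i < mm j)%nat.
Proof. intros i j Hi Hij. apply INR_lt. pose proof (xx_step i j Hi Hij).
  destruct (mm_R i Hi). destruct (mm_R j ltac:(lia)). lra. Qed.

Lemma index_mm : forall n0 i, (3 <= n0)%nat -> (n0 <= i)%nat -> index_set n0 (mm i).
Proof. intros. exists i. split; auto. apply mm_Z. lia. Qed.

Lemma index_inv : forall n0 m, index_set n0 m -> exists i, (n0 <= i)%nat /\ m = mm i.
Proof. intros n0 m [i [Hi Hm]]. exists i. split; auto. unfold mm, xx.
  rewrite <- Hm. rewrite Nat2Z.id. auto. Qed.

Definition Lw (w : list nat) : R := fold_right (fun j r => ln (INR j) + r) 0 w.

Lemma Lw_nonneg : forall w, Forall (fun j => (1 <= j)%nat) w -> 0 <= Lw w.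
Proof. induction w as [|j w IH]; intros H; simpl; [lra|].
  inversion H; subst. apply le_INR in H2. simpl in H2.
  assert (0 <= ln (INR j)) by (rewrite <- ln_1; apply ln_le'; lra).
  specialize (IH H3). lra. Qed.

Lemma wp_eq : forall w, Forall (fun j => (1 <= j)%nat) w ->
  word_prod A_diag w = Mat2 (exp (-(1/2) * Lw w)) 0 0 (exp (- Lw w)).
Proof. induction w as [|j w IH]; intros H; simpl.
  - unfold mid. replace (-(1/2)*0) with 0 by ring. replace (-0) with 0 by ring.
    rewrite exp_0. reflexivity.
  - inversion H; subst. rewrite (IH H3). apply le_INR in H2. simpl in H2.
    unfold mmul, A_diag; simpl. unfold Rpower.
    assert (/ INR j = exp (- ln (INR j))) by (rewrite exp_Ropp, exp_ln; lra).
    rewrite H0. f_equal.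
    + replace (-(1/2) * (ln (INR j) + Lw w)) with (-(1/2) * ln (INR j) + -(1/2) * Lw w) by ring.
      rewrite exp_plus. ring.
    + ring.
    + ring.
    + replace (- (ln (INR j) + Lw w)) with (- ln (INR j) + - Lw w) by ring.
      rewrite exp_plus. ring.
Qed.

Lemma sv_diag : forall a b, 0 < b <= a -> sv1 (Mat2 a 0 0 b) = a /\ sv2 (Mat2 a 0 0 b) = b.
Proof. intros a b H. unfold sv1, sv2, fro2, det2; cbn [m11 m12 m21 m22].
  replace ((a ^ 2 + 0 ^ 2 + 0 ^ 2 + b ^ 2) ^ 2 - 4 * (a * b - 0 * 0) ^ 2)
    with ((a^2 - b^2)^2) by ring.
  rewrite sqrt_pow2 by nra. split.
  - replace ((a ^ 2 + 0 ^ 2 + 0 ^ 2 + b ^ 2 + (a ^ 2 - b ^ 2)) / 2) with (a^2) by field.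
    apply sqrt_pow2; lra.
  - replace ((a ^ 2 + 0 ^ 2 + 0 ^ 2 + b ^ 2 - (a ^ 2 - b ^ 2)) / 2) with (b^2) by field.
    apply sqrt_pow2; lra.
Qed.

Definition sexp (t : R) : R :=
  if Rlt_dec t 1 then t / 2 else if Rlt_dec t 2 then t - 1/2 else 3 * t / 4.

Definition gg (s : R) (j : nat) : R := exp (- s * ln (INR j)).
Definition prodh (h : nat -> R) (w : list nat) : R := fold_right (fun j r => h j * r) 1 w.

Lemma prodh_exp : forall s w, prodh (gg s) w = exp (- s * Lw w).
Proof. induction w as [|j w IH]; simpl.
  - replace (- s * 0) with 0 by ring. now rewrite exp_0.
  - rewrite IH. unfold gg. rewrite <- exp_plus. f_equal; ring. Qed.

Lemma phi_eq : forall t w, Forall (fun j => (1 <= j)%nat) w ->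
  phi A_diag t w = prodh (gg (sexp t)) w.
Proof. intros t w H. unfold phi. rewrite (wp_eq w H), prodh_exp.
  pose proof (Lw_nonneg w H) as HL. set (L := Lw w) in *.
  assert (Hab : 0 < exp (- L) <= exp (-(1/2) * L)).
  { split. apply exp_pos. destruct (Req_dec L 0). subst L. rewrite H0.
    replace (-(1/2)*0) with (-0) by ring. lra. left; apply exp_increasing; lra. }
  destruct (sv_diag _ _ Hab) as [E1 E2].
  unfold sing_fun, sexp. rewrite E1, E2. unfold Rpower.
  destruct (Rlt_dec t 1).
  - rewrite ln_exp. f_equal. field.
  - destruct (Rlt_dec t 2).
    + rewrite ln_exp, <- exp_plus. f_equal. field.
    + rewrite <- exp_plus, ln_exp. f_equal. field.
Qed.

Definition listsum (l : list R) : R := fold_right Rplus 0 l.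

Fixpoint words (k : nat) (F : list nat) : list (list nat) :=
  match k with
  | O => [[]]
  | S k => flat_map (fun x => map (cons x) (words k F)) F
  end.

Lemma listsum_app : forall l1 l2, listsum (l1 ++ l2) = listsum l1 + listsum l2.
Proof. induction l1; intros; simpl; [ring|]. unfold listsum in *. rewrite IHl1. ring. Qed.

Lemma listsum_scal : forall (f : list nat -> R) c l,
  listsum (map (fun w => c * f w) l) = c * listsum (map f l).
Proof. induction l; simpl; [ring|]. unfold listsum in *. rewrite IHl. ring. Qed.

Lemma words_in : forall k F w, In w (words k F) <-> length w = k /\ Forall (fun x => In x F) w.
Proof. induction k as [|k IH]; intros F w; simpl.
  - split. intros [<-|[]]. split; auto. intros [H _]. destruct w; [auto|discriminate].
  - rewrite in_flat_map. split.
    + intros [x [Hx Hw]]. apply in_map_iff in Hw. destruct Hw as [w' [<- Hw']].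
      apply IH in Hw'. destruct Hw'. simpl. split; auto.
    + intros [Hl HF]. destruct w as [|x w]; [discriminate|]. inversion HF; subst.
      exists x. split; auto. apply in_map. apply IH. split; auto.
Qed.

Lemma nodup_fm : forall (W : list (list nat)) G, NoDup W -> NoDup G ->
  NoDup (flat_map (fun x => map (cons x) W) G).
Proof. intros W G HW. induction G as [|x G IH]; intros HG; simpl; [constructor|].
  inversion HG; subst. apply NoDup_app; auto.
  - apply NoDup_map_NoDup_ForallPairs; auto. intros a b _ _ E. inversion E; auto.
  - intros a Ha Hb. apply in_map_iff in Ha. destruct Ha as [w [<- _]].
    apply in_flat_map in Hb. destruct Hb as [y [Hy Hb]]. apply in_map_iff in Hb.
    destruct Hb as [w' [E _]]. inversion E; subst. auto.
Qed.

Lemma words_nodup : forall k F, NoDup F -> NoDup (words k F).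
Proof. induction k; intros F H; simpl. repeat constructor; auto. apply nodup_fm; auto. Qed.

Lemma words_sum : forall h k F,
  listsum (map (prodh h) (words k F)) = (listsum (map h F)) ^ k.
Proof. intros h k F. induction k as [|k IH]; simpl. unfold listsum; simpl; ring.
  rewrite <- IH. clear IH. generalize (words k F) as W. intros W.
  induction F as [|x F IHF]; simpl. unfold listsum; simpl; ring.
  rewrite map_app, listsum_app, IHF, map_map. simpl.
  rewrite (listsum_scal (prodh h) (h x) W). unfold listsum; simpl. ring.
Qed.

Lemma sub_sum : forall (f : list nat -> R) l L, NoDup l -> (forall w, In w l -> In w L) ->
  (forall w, In w L -> 0 <= f w) -> listsum (map f l) <= listsum (map f L).
Proof. intros f l. induction l as [|a l IH]; intros L Hn Hi Hp; simpl.
  - unfold listsum at 1; simpl. clear Hi. induction L; simpl; unfold listsum in *; simpl. lra.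
    assert (0 <= f a) by (apply Hp; left; auto). 
    assert (0 <= fold_right Rplus 0 (map f L)) by (apply IHL; intros; apply Hp; right; auto). lra.
  - inversion Hn; subst. assert (In a L) by (apply Hi; left; auto).
    apply in_split in H. destruct H as [L1 [L2 ->]].
    assert (listsum (map f l) <= listsum (map f (L1 ++ L2))).
    { apply IH; auto.
      - intros w Hw. assert (In w (L1 ++ a :: L2)) by (apply Hi; right; auto).
        apply in_app_or in H. apply in_or_app. destruct H as [H|[H|H]]; auto.
        subst; contradiction.
      - intros w Hw. apply Hp. apply in_app_or in Hw. apply in_or_app. simpl. tauto. }
    rewrite map_app, listsum_app in *. simpl. unfold listsum in *. simpl. lra.
Qed.

Lemma exp_le' : forall x y, x <= y -> exp x <= exp y.
Proof. intros x y H. destruct (Req_dec x y) as [->|]; [lra|]. left; apply exp_increasing; lra. Qed.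

Lemma sum_le_pt : forall (c d : nat -> R) l, (forall i, In i l -> c i <= d i) ->
  listsum (map c l) <= listsum (map d l).
Proof. induction l; intros H; simpl; unfold listsum in *; simpl. lra.
  assert (c a <= d a) by (apply H; left; auto).
  assert (fold_right Rplus 0 (map c l) <= fold_right Rplus 0 (map d l)) by (apply IHl; intros; apply H; right; auto).
  lra. Qed.

Lemma tele_up : forall (c U : nat -> R) a N, (forall i, (a <= i)%nat -> c i <= U i - U (S i)) ->
  listsum (map c (seq a N)) <= U a - U (a + N)%nat.
Proof. intros c U a N. revert a. induction N; intros a H; simpl; unfold listsum in *; simpl.
  rewrite Nat.add_0_r. lra.
  specialize (IHN (S a) ltac:(intros; apply H; lia)). specialize (H a (le_n a)).
  replace (a + S N)%nat with (S a + N)%nat by lia. lra. Qed.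

Lemma tele_lo : forall (c U : nat -> R) a N, (forall i, (a <= i)%nat -> U (S i) - U i <= c i) ->
  U (a + N)%nat - U a <= listsum (map c (seq a N)).
Proof. intros c U a N. revert a. induction N; intros a H; simpl; unfold listsum in *; simpl.
  rewrite Nat.add_0_r. lra.
  specialize (IHN (S a) ltac:(intros; apply H; lia)). specialize (H a (le_n a)).
  replace (a + S N)%nat with (S a + N)%nat by lia. lra. Qed.

Lemma listsum_nonneg : forall l, Forall (fun x => 0 <= x) l -> 0 <= listsum l.
Proof. induction l; intros H; simpl; unfold listsum in *; simpl. lra. inversion H; subst.
  specialize (IHl H3). lra. Qed.

Definition FF (a N : nat) : list nat := map mm (seq a N).

Lemma FF_nodup : forall a N, (3 <= a)%nat -> NoDup (FF a N).
Proof. intros a N. unfold FF. revert a. induction N; intros a Ha; simpl; constructor.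
  - intros H. apply in_map_iff in H. destruct H as [j [E Hj]]. apply in_seq in Hj.
    pose proof (mm_lt a j Ha ltac:(lia)). lia.
  - apply IHN. lia. Qed.

Lemma mm_pos : forall i, (3 <= i)%nat -> (1 <= mm i)%nat.
Proof. intros. pose proof (mm_ge i H). lia. Qed.

Lemma ln_pos' : forall x, 1 <= x -> 0 <= ln x.
Proof. intros. rewrite <- ln_1. apply ln_le'; lra. Qed.

Lemma ln10_gt2 : 2 < ln 10.
Proof. replace 2 with (ln (exp 2)) by apply ln_exp. apply ln_increasing. apply exp_pos.
  replace 2 with (1 + 1) by ring. rewrite exp_plus. pose proof exp_le_3. pose proof (exp_pos 1). nra. Qed.

Lemma conv_pt : forall s i, 1 <= s -> (11 <= i)%nat ->
  gg s (mm i) <= 2 / ln (INR i - 1) - 2 / ln (INR (S i) - 1).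
Proof. intros s i Hs Hi.
  assert (Hy : 11 <= INR i) by (apply le_INR in Hi; simpl in Hi; lra).
  rewrite S_INR. replace (INR i + 1 - 1) with (INR i) by ring.
  set (y := INR i) in *. destruct (mm_R i ltac:(lia)) as [Hm1 Hm2].
  pose proof (xx_ge i ltac:(lia)) as Hx. unfold xx in *. fold y in Hm1, Hm2, Hx.
  set (m := INR (mm i)) in *. set (L := ln y) in *.
  assert (HL : 1 <= L) by (apply ln_ge1; lia).
  assert (HL' : 2 < ln (y - 1)).
  { eapply Rlt_le_trans. apply ln10_gt2. apply ln_le'; lra. }
  assert (HLL : ln (y - 1) <= L) by (apply ln_le'; lra).
  assert (Hd : 1 / y <= L - ln (y - 1)).
  { pose proof (ln_le_m1 ((y-1)/y) ltac:(apply Rdiv_lt_0_compat; lra)).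
    unfold Rdiv in H. rewrite ln_mult, ln_Rinv in H by (try apply Rinv_0_lt_compat; lra). fold L in H.
    replace ((y - 1) * / y - 1) with (- (1/y)) in H. lra. field; lra. }
  assert (Hg : gg s (mm i) <= / m).
  { unfold gg. fold m. rewrite <- (exp_ln m) at 2 by lra. rewrite <- exp_Ropp.
    apply exp_le'. assert (0 <= ln m) by (apply ln_pos'; lra). nra. }
  eapply Rle_trans; [apply Hg|].
  assert (/ m <= 2 / (y * L^2)).
  { apply Rle_trans with (/ (y * L ^ 2 / 2)). apply Rinv_le_contravar. nra. lra.
    right; field. split; nra. }
  eapply Rle_trans; [apply H|].
  set (L1 := ln (y - 1)) in *.
  replace (2 / L1 - 2 / L) with (2 * (L - L1) / (L1 * L)) by (field; lra).
  apply Rle_trans with (2 * (1/y) / (L * L)).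
  - right. field. lra.
  - assert (/ (L * L) <= / (L1 * L)) by (apply Rinv_le_contravar; nra).
    assert (0 <= 1 / y) by (apply Rlt_le, Rdiv_lt_0_compat; lra).
    assert (0 <= / (L * L)) by (left; apply Rinv_0_lt_compat; nra).
    assert (1 / y * / (L * L) <= (L - L1) * / (L1 * L)) by (apply Rmult_le_compat; lra).
    unfold Rdiv. nra.
Qed.

Definition Psum (s : R) (a N : nat) : R := listsum (map (gg s) (FF a N)).

Lemma Psum_eq : forall s a N, Psum s a N = listsum (map (fun i => gg s (mm i)) (seq a N)).
Proof. intros. unfold Psum, FF. now rewrite map_map. Qed.

Lemma Psum_nonneg : forall s a N, 0 <= Psum s a N.
Proof. intros. apply listsum_nonneg. apply Forall_forall. intros x Hx.
  apply in_map_iff in Hx. destruct Hx as [j [<- _]]. left; apply exp_pos. Qed.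

Lemma conv_bound : forall s N, 1 <= s -> Psum s 11 N <= 2 / ln 10.
Proof. intros s N Hs. rewrite Psum_eq.
  eapply Rle_trans. apply (tele_up _ (fun i => 2 / ln (INR i - 1))).
  intros i Hi. apply conv_pt; auto.
  assert (INR 11 - 1 = 10) by (simpl; lra). rewrite H.
  assert (0 <= 2 / ln (INR (11 + N) - 1)).
  { assert (11 <= INR (11 + N)) by (replace 11 with (INR 11) by (simpl; lra); apply le_INR; lia).
    assert (2 < ln (INR (11 + N) - 1)).
    { eapply Rlt_le_trans. apply ln10_gt2. apply ln_le'; lra. }
    apply Rlt_le, Rdiv_lt_0_compat; lra. }
  lra. Qed.

Lemma harm_pt : forall i, (1 <= i)%nat -> ln (INR (S i)) - ln (INR i) <= / INR i.
Proof. intros i Hi. apply le_INR in Hi. simpl in Hi. rewrite S_INR.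
  pose proof (ln_le_m1 ((INR i + 1) / INR i) ltac:(apply Rdiv_lt_0_compat; lra)).
  unfold Rdiv in H. rewrite ln_mult, ln_Rinv in H by (try apply Rinv_0_lt_compat; lra).
  replace ((INR i + 1) * / INR i - 1) with (/ INR i) in H. lra. field; lra. Qed.

Lemma div_pt : forall s, 0 <= s < 1 -> exists N1, (11 <= N1)%nat /\
  forall i, (N1 <= i)%nat -> / INR i <= gg s (mm i).
Proof. intros s Hs. set (C := 4 * s / (1 - s)).
  assert (HC : 0 <= C) by (apply Rmult_le_pos; [lra| left; apply Rinv_0_lt_compat; lra]).
  destruct (INR_archimed 1 (exp (C ^ 2)) ltac:(lra)) as [N HN]. rewrite Rmult_1_r in HN.
  exists (max 11 N). split; [lia|]. intros i Hi.
  assert (HiN : INR N <= INR i) by (apply le_INR; lia).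
  assert (H11 : 11 <= INR i) by (replace 11 with (INR 11) by (simpl; lra); apply le_INR; lia).
  set (y := INR i) in *. destruct (mm_R i ltac:(lia)) as [Hm1 Hm2].
  unfold xx in *. fold y in Hm1, Hm2. set (m := INR (mm i)) in *. set (L := ln y) in *.
  assert (HL : 1 <= L) by (apply ln_ge1; lia).
  assert (Hm : 1 <= m) by (unfold m; pose proof (mm_pos i ltac:(lia)); apply le_INR in H; simpl in H; lra).
  assert (HCL : C ^ 2 <= L).
  { rewrite <- (ln_exp (C^2)). apply ln_le'. apply exp_pos. lra. }
  set (u := sqrt L).
  assert (Hu : C <= u) by (rewrite <- (sqrt_pow2 C) by lra; apply sqrt_le_1_alt; lra).
  assert (HuL : u ^ 2 = L) by (apply pow2_sqrt; lra).
  assert (Hu0 : 0 <= u) by apply sqrt_pos.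
  assert (HlnL : ln L <= 2 * u).
  { rewrite <- HuL. rewrite ln_pow by (destruct (Req_dec u 0); [nra|lra]).
    assert (0 < u) by nra. pose proof (ln_le_m1 u H). simpl. lra. }
  assert (Hlnm : ln m <= L + 2 * ln L).
  { eapply Rle_trans. apply ln_le'. lra. apply Hm2.
    rewrite ln_mult by (try apply pow_lt; lra). rewrite ln_pow by lra. fold L. simpl. lra. }
  assert (H4 : 4 * s <= (1 - s) * u).
  { replace (4 * s) with ((1 - s) * C) by (unfold C; field; lra). apply Rmult_le_compat_l; lra. }
  assert (s * ln m <= L).
  { assert (0 <= ln m) by (apply ln_pos'; lra).
    apply Rle_trans with (s * (u^2 + 4 * u)). apply Rmult_le_compat_l; lra. nra. }
  unfold gg. fold m. rewrite <- (exp_ln y) by lra. rewrite <- exp_Ropp. apply exp_le'.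
  fold L. lra.
Qed.

Lemma div_unbounded : forall s, 0 <= s < 1 -> exists N1, (11 <= N1)%nat /\
  forall M, exists N, M < Psum s N1 N.
Proof. intros s Hs. destruct (div_pt s Hs) as [N1 [HN1 Hpt]]. exists N1. split; auto.
  intros M. assert (HN1r : 11 <= INR N1) by (replace 11 with (INR 11) by (simpl; lra); apply le_INR; lia).
  destruct (INR_archimed 1 (exp (M + ln (INR N1))) ltac:(lra)) as [N HN]. rewrite Rmult_1_r in HN.
  exists N. rewrite Psum_eq.
  eapply Rlt_le_trans. 2: { eapply Rle_trans. 2: apply sum_le_pt.
    2: { intros i Hi. apply in_seq in Hi. apply Hpt. lia. }
    apply (tele_lo _ (fun i => ln (INR i))). intros i Hi. apply harm_pt. lia. }
  rewrite plus_INR.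
  assert (M + ln (INR N1) < ln (INR N1 + INR N)).
  { rewrite <- (ln_exp (M + ln (INR N1))) at 1. apply ln_increasing. apply exp_pos. lra. }
  lra. Qed.

Definition II := index_set 11.

Lemma I_letters : forall w, Forall II w -> Forall (fun j => (1 <= j)%nat) w.
Proof. intros w H. eapply Forall_impl; [|exact H]. intros j Hj.
  destruct (index_inv _ _ Hj) as [i [Hi ->]]. apply mm_pos. lia. Qed.

Lemma map_phi : forall t (l : list (list nat)), Forall (fun w => Forall II w) l ->
  map (phi A_diag t) l = map (prodh (gg (sexp t))) l.
Proof. intros t l H. apply map_ext_in. intros w Hw. apply phi_eq. apply I_letters.
  rewrite Forall_forall in H. auto. Qed.

Lemma ps_words : forall t k a N, (11 <= a)%nat ->
  partial_sums II A_diag t k ((Psum (sexp t) a N) ^ k).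
Proof. intros t k a N Ha. exists (words k (FF a N)).
  assert (HF : Forall (word_in II k) (words k (FF a N))).
  { apply Forall_forall. intros w Hw. apply words_in in Hw. destruct Hw as [Hl Hw].
    split; auto. eapply Forall_impl; [|exact Hw]. intros j Hj. unfold FF in Hj.
    apply in_map_iff in Hj. destruct Hj as [i [<- Hi]]. apply in_seq in Hi.
    apply index_mm; lia. }
  split. apply words_nodup. apply FF_nodup; lia. split; auto.
  rewrite map_phi. unfold Psum. rewrite <- words_sum. reflexivity.
  eapply Forall_impl; [|exact HF]. intros w [_ Hw]; auto. Qed.

Lemma ps_upper : forall t k x, partial_sums II A_diag t k x ->
  exists N, x <= (Psum (sexp t) 11 N) ^ k.
Proof. intros t k x [l [Hn [Hw ->]]]. set (B := list_max (concat l)).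
  exists (S B). unfold Psum. rewrite <- words_sum. rewrite map_phi.
  2: { eapply Forall_impl; [|exact Hw]. intros w [_ H]; auto. }
  apply sub_sum; auto.
  - intros w Hwl. rewrite Forall_forall in Hw. destruct (Hw w Hwl) as [Hlen HI].
    apply words_in. split; auto. apply Forall_forall. intros j Hj.
    rewrite Forall_forall in HI. destruct (index_inv _ _ (HI j Hj)) as [i [Hi Ej]].
    assert (HjB : (j <= B)%nat).
    { assert (Forall (fun k => k <= B)%nat (concat l)) by (apply list_max_le; lia).
      rewrite Forall_forall in H. apply H. apply in_concat. eauto. }
    pose proof (mm_ge i ltac:(lia)). unfold FF. rewrite Ej. apply in_map. apply in_seq. lia.
  - intros w _. rewrite prodh_exp. left; apply exp_pos.
Qed.

Lemma sexp_div : forall t, 0 <= t < 3/2 -> 0 <= sexp t < 1.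
Proof. intros t Ht. unfold sexp. destruct (Rlt_dec t 1); [lra|]. destruct (Rlt_dec t 2); lra. Qed.

Lemma sexp_conv : forall t, 3/2 <= t -> 1 <= sexp t.
Proof. intros t Ht. unfold sexp. destruct (Rlt_dec t 1); [lra|]. destruct (Rlt_dec t 2); lra. Qed.

Lemma div_inf : forall t k, 0 <= t < 3/2 -> (1 <= k)%nat -> Zsum_infinite II A_diag t k.
Proof. intros t k Ht Hk [b Hb]. destruct (div_unbounded (sexp t) (sexp_div t Ht)) as [N1 [HN1 Hun]].
  destruct (Hun (Rmax b 1)) as [N HN]. pose proof (Rmax_l b 1). pose proof (Rmax_r b 1).
  set (P := Psum (sexp t) N1 N) in *.
  assert (P <= P ^ k).
  { destruct k; [lia|]. simpl. pose proof (pow_R1_Rle P k ltac:(lra)). nra. }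
  pose proof (Hb _ (ps_words t k N1 N HN1)). fold P in H2. lra. Qed.

Lemma pow_diff : forall S x k, 0 <= x <= S ->
  S ^ (Datatypes.S k) - x ^ (Datatypes.S k) <= INR (Datatypes.S k) * S ^ k * (S - x).
Proof. intros S x k Hx. induction k.
  - simpl. lra.
  - assert (x ^ (Datatypes.S k) <= S ^ (Datatypes.S k)) by (apply pow_incr; lra).
    assert (0 <= x ^ (Datatypes.S k)) by (apply pow_le; lra).
    replace (S ^ Datatypes.S (Datatypes.S k) - x ^ Datatypes.S (Datatypes.S k))
      with (S * (S ^ Datatypes.S k - x ^ Datatypes.S k) + x ^ Datatypes.S k * (S - x)) by (simpl; ring).
    rewrite (S_INR (Datatypes.S k)).
    assert (S * (S ^ Datatypes.S k - x ^ Datatypes.S k) <= S * (INR (Datatypes.S k) * S ^ k * (S - x)))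
      by (apply Rmult_le_compat_l; lra).
    assert (x ^ Datatypes.S k * (S - x) <= S ^ Datatypes.S k * (S - x)) by (apply Rmult_le_compat_r; lra).
    simpl in *. nra.
Qed.

Lemma conv_lub : forall t, 3/2 <= t -> exists S, 0 < S < 1 /\
  forall k, (1 <= k)%nat -> Zsum_finite II A_diag t k (S ^ k).
Proof. intros t Ht. set (s := sexp t). pose proof (sexp_conv t Ht) as Hs. fold s in Hs.
  set (E := fun r => exists N, r = Psum s 11 N).
  assert (HB : bound E).
  { exists (2 / ln 10). intros r [N ->]. apply conv_bound; auto. }
  destruct (completeness E HB (ex_intro _ _ (ex_intro _ 1%nat eq_refl))) as [S [HS1 HS2]].
  assert (Hpos : 0 < S).
  { eapply Rlt_le_trans. 2: apply HS1; exists 1%nat; reflexivity.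
    unfold Psum, FF, listsum; simpl. pose proof (exp_pos (- s * ln (INR (mm 11)))). unfold gg. lra. }
  assert (HS1' : S <= 2 / ln 10).
  { apply HS2. intros r [N ->]. apply conv_bound; auto. }
  assert (2 / ln 10 < 1).
  { pose proof ln10_gt2. apply (Rmult_lt_reg_r (ln 10)). lra. unfold Rdiv.
    rewrite Rmult_assoc, Rinv_l by lra. lra. }
  exists S. split; [lra|]. intros k Hk. split.
  - intros x Hx. destruct (ps_upper t k x Hx) as [N HN]. fold s in HN.
    eapply Rle_trans; [exact HN|]. apply pow_incr. split. apply Psum_nonneg.
    apply HS1. exists N; reflexivity.
  - intros b Hb. destruct (Rle_lt_dec (S ^ k) b) as [|Hlt]; auto. exfalso.
    destruct k as [|k']; [lia|].
    set (c := INR (Datatypes.S k') * S ^ k').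
    assert (Hc : 0 < c) by (apply Rmult_lt_0_compat; [apply lt_0_INR; lia| apply pow_lt; lra]).
    set (d := (S ^ Datatypes.S k' - b) / c).
    assert (Hd : 0 < d) by (apply Rdiv_lt_0_compat; lra).
    assert (Hex : exists N, S - d < Psum s 11 N).
    { destruct (Classical_Prop.classic (exists N, S - d < Psum s 11 N)) as [Hy|Hn]; auto.
      exfalso. assert (S <= S - d); [|lra]. apply HS2. intros r [N ->].
      destruct (Rle_lt_dec (Psum s 11 N) (S - d)); auto. exfalso; apply Hn; eauto. }
    destruct Hex as [N HN]. set (P := Psum s 11 N) in *.
    assert (HP : 0 <= P <= S) by (split; [apply Psum_nonneg| apply HS1; exists N; reflexivity]).
    pose proof (pow_diff S P k' HP). fold c in H0.
    assert (c * (S - P) < c * d) by (apply Rmult_lt_compat_l; lra).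
    assert (c * d = S ^ Datatypes.S k' - b) by (unfold d; field; lra).
    pose proof (Hb _ (ps_words t (Datatypes.S k') 11 N (le_n _))). fold s P in H3.
    lra.
Qed.

Lemma const_cv : forall S, 0 < S -> Un_cv (fun k => ln (S ^ Datatypes.S k) / INR (Datatypes.S k)) (ln S).
Proof. intros S HS eps Heps. exists 0%nat. intros n _. rewrite ln_pow by lra.
  unfold R_dist. replace (INR (Datatypes.S n) * ln S / INR (Datatypes.S n) - ln S) with 0.
  rewrite Rabs_R0; lra. field. apply not_0_INR. lia. Qed.

Theorem mainTheorem9 :
  exists n0 : nat,
    (forall t : R, 0 <= t < 3/2 -> pressure_infinite (index_set n0) A_diag t) /\
    (forall t : R, 3/2 <= t -> exists L : R, L < 0 /\ pressure_is (index_set n0) A_diag t L) /\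
    (forall t : R, 0 <= t -> ~ pressure_is (index_set n0) A_diag t 0).
Proof.
  exists 11%nat. split; [|split].
  - intros t Ht M. exists 1%nat. intros k _ Hk. left. apply div_inf; auto.
  - intros t Ht. destruct (conv_lub t Ht) as [S [HS HZ]]. exists (ln S). split.
    + rewrite <- ln_1. apply ln_increasing; lra.
    + exists (fun k => S ^ k). split; auto. apply const_cv; lra.
  - intros t Ht [Z [HZ Hcv]]. destruct (Rlt_le_dec t (3/2)) as [Hlt|Hge].
    + destruct (HZ 1%nat (le_n _)) as [Hub _]. apply (div_inf t 1%nat); auto. exists (Z 1%nat). exact Hub.
    + destruct (conv_lub t Hge) as [S [HS HS']].
      assert (Un_cv (fun k => ln (Z (Datatypes.S k)) / INR (Datatypes.S k)) (ln S)).
      { intros eps Heps. destruct (const_cv S ltac:(lra) eps Heps) as [N HN]. exists N.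
        intros n Hn. rewrite (is_lub_u _ _ _ (HZ (Datatypes.S n) ltac:(lia)) (HS' (Datatypes.S n) ltac:(lia))).
        apply HN; auto. }
      pose proof (UL_sequence _ _ _ Hcv H).
      assert (ln S < 0) by (rewrite <- ln_1; apply ln_increasing; lra). lra.
Qed.
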